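(* Let $J>h>0$ and $\sigma\in\mathcal X$. (i) If some cluster or plus strip of $\sigma$ has an internal angle $\frac53\pi$ or an internal angle $\frac13\pi$, then $V_\sigma=0$; in particular $\sigma\notin\mathcal X_0$. (ii) If some cluster or plus strip of $\sigma$ has an internal angle $\frac43\pi$, then $V_\sigma\le J-h$; in particular $\sigma\notin\mathcal X_{J-h}$.
   Context: Let $\mathbb{T}^2$ denote the triangular lattice embedded in $\mathbb{R}^2$ and $\mathbb{H}^2$ its dual, the hexagonal lattice; each vertex $i$ of $\mathbb{H}^2$ is the centre of a unique closed triangular face of $\mathbb{T}^2$ (the face centred at $i$), and $d$ denotes the graph distance on $\mathbb{H}^2$, so $d(i,j)=1$ iff the faces centred at $i$ and $j$ share an edge. Fix an integer $L\ge1$ and let $\Lambda\subset\mathbb{H}^2$ be the set of sites in a parallelogram of side length $L$ cut along two coordinate axes of $\mathbb{T}^2$, with periodic boundary conditions; thus $\Lambda$ is a discrete torus with $|\Lambda|=2L^2$ sites, each having 3 nearest neighbours. Let $\mathcal X=\{-1,+1\}^\Lambda$ and let $\underline{+1}$, $\underline{-1}$ be the configurations with all spins $+1$, resp. $-1$. For $J,h>0$ the Hamiltonian is $H(\sigma)=-\frac J2\sum_{\{i,j\}\subset\Lambda:\,d(i,j)=1}\sigma(i)\sigma(j)-\frac h2\sum_{i\in\Lambda}\sigma(i)$ (sum over unordered nearest-neighbour pairs), so that $H(\sigma)-H(\underline{-1})=J|\gamma(\sigma)|-hN^+(\sigma)$, where $|\gamma(\sigma)|$ is the number of nearest-neighbour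 pairs carrying opposite spins and $N^+(\sigma)$ is the number of sites with spin $+1$. For $x\in\Lambda$, $\sigma^{(x)}$ denotes $\sigma$ with the spin at $x$ reversed. Metastability notions: a path is a finite sequence $(\omega_1,\dots,\omega_n)$ in $\mathcal X$ with each $\omega_{k+1}=\omega_k^{(x)}$ for some $x\in\Lambda$; $\Theta(\sigma,\eta)$ is the set of paths from $\sigma$ to $\eta$; $\Phi(\sigma,\eta)=\min_{\omega\in\Theta(\sigma,\eta)}\max_{\zeta\in\omega}H(\zeta)$ and $\Phi(A,B)=\min_{\sigma\in A,\eta\in B}\Phi(\sigma,\eta)$. $\mathcal I_\sigma=\{\eta: H(\eta)<H(\sigma)\}$; the stability level is $V_\sigma=\Phi(\sigma,\mathcal I_\sigma)-H(\sigma)$ ($V_\sigma=\infty$ if $\mathcal I_\sigma=\emptyset$); $\mathcal X_V=\{\sigma\in\mathcal X: V_\sigma>V\}$. Clusters: for $\sigma\in\mathcal X$ let $C(\sigma)$ be the union (on the torus) of the closed faces centred at the sites $i$ with $\sigma(i)=+1$. A maximal connected component of $C(\sigma)$ is called a plus strip if it wraps around the torus and a cluster otherwise. A cluster or plus strip $C$ has an internal angle $k\pi/3$ ($k\in\{1,\dots,5\}$) at a vertex $v$ of $\mathbb T^2$ if exactly $k$ of the six faces of $\mathbb T^2$ incident to $v$ belong to $C$ and these $k$ faces are consecutive in the cyclic order around $v$. *)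

(* Defs.v *)
From HB Require Import structures.
From mathcomp Require Import all_boot all_order all_algebra.
From mathcomp Require Import fingraph.
Set Implicit Arguments. Unset Strict Implicit. Unset Printing Implicit Defensive.
Import Order.TTheory GRing.Theory Num.Theory.
Local Open Scope ring_scope.

(* The torus has side length L = n.+1 (so L >= 1).  Coordinates live in
   'I_n.+1 = Z/LZ with its canonical Z-module structure.                *)

Definition inc {n} (a : 'I_n.+1) : 'I_n.+1 := (a + inZp 1)%R.
Definition dec {n} (a : 'I_n.+1) : 'I_n.+1 := (a - inZp 1)%R.

(* vertices of the triangular lattice T^2 on the torus: a e1 + b e2,
   e1 = (1,0), e2 = (1/2, sqrt3/2). *)
Definition vtx (n : nat) := ('I_n.+1 * 'I_n.+1)%type.

(* sites of Lambda = triangular faces: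
   (a,b,true)  = up face   U(a,b) with vertices (a,b),(a+1,b),(a,b+1)
   (a,b,false) = down face D(a,b) with vertices (a+1,b),(a,b+1),(a+1,b+1) *)
Definition site (n : nat) := ('I_n.+1 * 'I_n.+1 * bool)%type.

(* edges of T^2 on the torus: (a,b,0) = [(a,b),(a+1,b)],
   (a,b,1) = [(a,b),(a,b+1)], (a,b,2) = [(a+1,b),(a,b+1)] *)
Definition edge (n : nat) := ('I_n.+1 * 'I_n.+1 * 'I_3)%type.

Definition e0 : 'I_3 := @Ordinal 3 0 isT.
Definition e1 : 'I_3 := @Ordinal 3 1 isT.
Definition e2 : 'I_3 := @Ordinal 3 2 isT.

Definition face_edges {n} (i : site n) : {set edge n} :=
  let: (a, b, up) := i in
  if up then [set (a, b, e0); (a, b, e1); (a, b, e2)]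
  else [set (a, b, e2); (a, inc b, e0); (inc a, b, e1)].

Definition face_verts {n} (i : site n) : {set vtx n} :=
  let: (a, b, up) := i in
  if up then [set (a, b); (inc a, b); (a, inc b)]
  else [set (inc a, b); (a, inc b); (inc a, inc b)].

(* d(i,j) = 1 : the faces centred at i and j share an edge *)
Definition nn {n} (i j : site n) : bool :=
  (i != j) && (face_edges i :&: face_edges j != set0).

Definition nnpair {n} (e : {set site n}) : bool :=
  [exists i, exists j, nn i j && (e == [set i; j])].

(* configurations: true = spin +1, false = spin -1 *)
Definition config (n : nat) := {ffun site n -> bool}.

Definition spin {R : realFieldType} {n} (s : config n) (i : site n) : R :=
  if s i then 1 else -1.

Definition Ham {R : realFieldType} {n} (J h : R) (s : config n) : R :=
  - (J / 2) * (\sum_(e : {set site n} | nnpair e) \prod_(i in e) spin s i)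
  - (h / 2) * (\sum_(i : site n) spin s i).

Definition flip {n} (s : config n) (x : site n) : config n :=
  [ffun y => if y == x then ~~ s y else s y].

Definition step {n} (s t : config n) : bool := [exists x, t == flip s x].

Definition reach_below {R : realFieldType} {n} (J h c : R) (s t : config n) : bool :=
  (Ham J h s <= c) &&
  connect [rel a b | step a b && (Ham J h b <= c)] s t.

(* minimum of a (nonempty) finite list of reals *)
Definition seqmin {R : realFieldType} (l : seq R) : R :=
  foldr Num.min (head 0 l) l.

(* Phi(s,t) = min over paths from s to t of the max energy along the path;
   this max always is one of the finitely many values Ham z. *)
Definition Phi {R : realFieldType} {n} (J h : R) (s t : config n) : R :=
  seqmin [seq Ham J h z | z <- enum [pred z : config n | reach_below J h (Ham J h z) s t]].

Definition PhiSet {R : realFieldType} {n} (J h : R) (s : config n)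
  (A : {set config n}) : R :=
  seqmin [seq Phi J h s t | t <- enum A].

Definition Iset {R : realFieldType} {n} (J h : R) (s : config n) : {set config n} :=
  [set t | Ham J h t < Ham J h s].

(* stability level; None stands for +infinity *)
Definition Vstab {R : realFieldType} {n} (J h : R) (s : config n) : option R :=
  if Iset J h s == set0 then None
  else Some (PhiSet J h s (Iset J h s) - Ham J h s).

Definition Xlev {R : realFieldType} {n} (J h V : R) : {set config n} :=
  [set s | if Vstab J h s is Some v then V < v else true].

(* Clusters / plus strips: maximal connected components of the union of the
   closed plus faces.  Two closed faces intersect iff they share a vertex. *)
Definition touch {n} (i j : site n) : bool := face_verts i :&: face_verts j != set0.

Definition comp {n} (s : config n) (i : site n) : {set site n} :=
  [set j | s i && s j && connect [rel a b | s a && s b && touch a b] i j].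

(* the six faces incident to vertex v=(a,b), in counterclockwise order *)
Definition around {n} (v : vtx n) (p : 'I_6) : site n :=
  let: (a, b) := v in
  nth (a, b, true)
    [:: (a, b, true); (dec a, b, false); (dec a, b, true);
        (dec a, dec b, false); (a, dec b, true); (a, dec b, false)] p.

(* C has internal angle k*pi/3 at v: exactly k of the six incident faces
   belong to C and they are cyclically consecutive. *)
Definition has_angle {n} (C : {set site n}) (v : vtx n) (k : nat) : bool :=
  (#|[set p : 'I_6 | around v p \in C]| == k) &&
  [exists st : 'I_6,
     [set p : 'I_6 | around v p \in C] == [set p : 'I_6 | ((p + 6 - st) %% 6 < k)%N]].

Definition is_component {n} (s : config n) (C : {set site n}) : Prop :=
  exists i, s i /\ C = comp s i.

(* Main.v *)
Require Import Defs.
From HB Require Import structures.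
From mathcomp Require Import all_boot all_order all_algebra fingraph ring lra.
Import Order.TTheory GRing.Theory Num.Theory.
Local Open Scope ring_scope.

Section Gen.
Variable R : realFieldType.

Lemma foldr_min_le (l : seq R) x0 y : y \in l -> foldr Num.min x0 l <= y.
Proof.
elim: l => //= a l IH; rewrite inE => /orP [/eqP ->|/IH H].
  by rewrite ge_min lexx.
by rewrite ge_min H orbT.
Qed.

Lemma seqmin_le (l : seq R) y : y \in l -> seqmin l <= y.
Proof. exact: foldr_min_le. Qed.

Lemma foldr_min_ge (l : seq R) x0 c : c <= x0 -> (forall y, y \in l -> c <= y) ->
  c <= foldr Num.min x0 l.
Proof.
move=> hx; elim: l => //= a l IH H.
rewrite le_min H ?inE ?eqxx //= IH // => y hy; apply: H; by rewrite inE hy orbT.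
Qed.

Lemma seqmin_ge (l : seq R) c : l != [::] -> (forall y, y \in l -> c <= y) ->
  c <= seqmin l.
Proof.
case: l => //= a l _ H; apply: foldr_min_ge; first by apply: H; rewrite inE eqxx.
exact: H.
Qed.
End Gen.
Section Conn.
Variable n : nat.
Lemma connect_all (e : rel (config n)) : (forall s x, e s (flip s x)) ->
  forall s t, connect e s t.
Proof.
move=> He.
suff H : forall k (s t : config n), (#|[set x | s x != t x]| <= k)%N -> connect e s t.
  by move=> s t; apply: (H _ s t (leqnn _)).
elim=> [|k IH] s t.
  rewrite leqn0 cards_eq0 => /eqP H0; suff -> : s = t by apply: connect0.
  apply/ffunP => x; apply/eqP; apply/negPn/negP => hx.
  by move/setP: H0 => /(_ x); rewrite !inE hx.
move=> hk; case: (set_0Vmem [set x | s x != t x]) => [H0|[x hx]].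
  suff -> : s = t by apply: connect0.
  apply/ffunP => y; apply/eqP; apply/negPn/negP => hy.
  by move/setP: H0 => /(_ y); rewrite !inE hy.
apply: (connect_trans (connect1 (He s x))); apply: IH.
have -> : [set y | flip s x y != t y] = [set y | s y != t y] :\ x.
  apply/setP => y; rewrite !inE /flip ffunE.
  case: (eqVneq y x) => [->|] //=.
  by move: hx; rewrite inE; case: (s x); case: (t x).
by rewrite (cardsD1 x) hx in hk.
Qed.
End Conn.
Section Ham.
Variable R : realFieldType.
Variable n : nat.
Implicit Types (s : config n) (x y : site n).

Lemma nnC x y : nn x y = nn y x.
Proof. by rewrite /nn eq_sym setIC. Qed.

Lemma nn_neq x y : nn x y -> x != y.
Proof. by case/andP. Qed.

Lemma flipE s x y : flip s x y = if y == x then ~~ s y else s y.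
Proof. by rewrite /flip ffunE. Qed.

Lemma spin_flipx s x : spin (flip s x) x = - spin s x :> R.
Proof. by rewrite /spin flipE eqxx; case: (s x); rewrite ?opprK. Qed.

Lemma spin_flipy s x y : y != x -> spin (flip s x) y = spin s y :> R.
Proof. by move=> hy; rewrite /spin flipE (negbTE hy). Qed.

Lemma sum_spin_flip s x :
  \sum_i spin (flip s x) i = \sum_i spin s i - 2 * spin s x :> R.
Proof.
rewrite (bigD1 x) //= [in RHS](bigD1 x) //= spin_flipx.
rewrite (eq_bigr (fun i => spin s i)); last by move=> i hi; rewrite spin_flipy.
rewrite mulr2n; ring.
Qed.

Definition P s (e : {set site n}) : R := \prod_(i in e) spin s i.

Lemma P_flip_out s x (e : {set site n}) : x \notin e -> P (flip s x) e = P s e.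
Proof.
move=> hx; apply: eq_bigr => i hi; apply: spin_flipy.
by apply: contraNneq hx => <-.
Qed.

Lemma P_flip_in s x (e : {set site n}) : x \in e -> P (flip s x) e = - P s e.
Proof.
move=> hx; rewrite /P (bigD1 x) // [in RHS](bigD1 x) //= spin_flipx.
rewrite (eq_bigr (fun i => spin s i)); last by move=> i /andP [_ hi]; rewrite spin_flipy.
by rewrite mulNr.
Qed.

Lemma sumP_flip s x :
  \sum_(e | nnpair e) P (flip s x) e =
  \sum_(e | nnpair e) P s e - 2 * \sum_(e | nnpair e && (x \in e)) P s e.
Proof.
rewrite (bigID (fun e : {set site n} => x \in e)) [in RHS](bigID (fun e : {set site n} => x \in e)) /=.
rewrite (eq_bigr (fun e => - P s e)); last by move=> e /andP [_ he]; rewrite (P_flip_in _ _ _ he).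
rewrite [in X in _ + X = _](eq_bigr (fun e => P s e)); last first.
  by move=> e /andP [_ he]; rewrite (P_flip_out _ _ _ he).
rewrite sumrN mulr2n; ring.
Qed.

Lemma sumP_x s x :
  \sum_(e | nnpair e && (x \in e)) P s e = spin s x * \sum_(j | nn x j) spin s j.
Proof.
have inj : {in [set j | nn x j] &, injective (fun j => [set x; j])}.
  move=> j j'; rewrite !inE => hj hj' E.
  have : j \in [set x; j'] by rewrite -E !inE eqxx orbT.
  by rewrite !inE eq_sym (negbTE (nn_neq _ _ hj)) /= => /eqP.
rewrite (eq_bigl (fun e => e \in [set [set x; j] | j in [set j | nn x j]])); last first.
  move=> e; apply/andP/imsetP.
    case=> /existsP [i /existsP [j /andP [hij /eqP He]]] hx.
    move: hx; rewrite He => /set2P [Hx|Hx].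
      by subst x; exists j; rewrite ?inE.
    subst x; exists i; first by rewrite inE nnC.
    by apply/setP => y; rewrite !inE orbC.
  case=> j; rewrite inE => hj ->; split; last by rewrite !inE eqxx.
  by apply/existsP; exists x; apply/existsP; exists j; rewrite hj eqxx.
rewrite big_imset //= mulr_sumr; apply: eq_big => j; first by rewrite inE.
move=> hj; rewrite /P big_setU1 ?big_set1 //= inE.
by move: hj; rewrite inE => /nn_neq; rewrite eq_sym.
Qed.

Lemma ham_flip (J h : R) s x :
  Ham J h (flip s x) = Ham J h s + spin s x * (J * \sum_(j | nn x j) spin s j + h).
Proof.
rewrite /Ham sum_spin_flip.
have := sumP_flip s x; rewrite /P => ->.
have := sumP_x s x; rewrite /P => ->.
rewrite mulr2n; field; by [].
Qed.
End Ham.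
Lemma card3le (T : finType) (a b c : T) : (#|[set a; b; c]| <= 3)%N.
Proof.
apply: (leq_trans (leq_card_setU _ _)); rewrite cards1 cards2.
by case: (a != b).
Qed.

Section Geo.
Variable n : nat.
Implicit Types (s : config n) (x y : site n) (a b : 'I_n.+1).

Lemma incK a : dec (inc a) = a. Proof. by rewrite /dec /inc addrK. Qed.
Lemma decK a : inc (dec a) = a. Proof. by rewrite /dec /inc subrK. Qed.

Definition up_of (e : edge n) : site n := let: (c, d, k) := e in (c, d, true).
Definition down_of (e : edge n) : site n := let: (c, d, k) := e in
  if k == e0 then (c, dec d, false) else if k == e1 then (dec c, d, false)
  else (c, d, false).

Lemma edge_faces (e : edge n) j : e \in face_edges j -> j = up_of e \/ j = down_of e.
Proof.
case: j => [[a b] []] /=; rewrite !inE -!orbA => /or3P [] /eqP -> /=; auto.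
- by right; rewrite incK.
- by right; rewrite incK.
Qed.

Lemma card_face_edges x : (#|face_edges x| <= 3)%N.
Proof. by case: x => [[a b] []]; apply: card3le. Qed.

Definition nbrs x := [set j | nn x j].

Lemma card_nbrs x : (#|nbrs x| <= 3)%N.
Proof.
pose f j := odflt (ord0, ord0, e0) [pick e in face_edges x :&: face_edges j].
have fP j : j \in nbrs x -> f j \in face_edges x :&: face_edges j.
  rewrite inE => /andP [_ hj]; rewrite /f.
  case: pickP => [e he|H] //=.
  by case/set0Pn: hj => e he; move: (H e); rewrite he.
have inj : {in nbrs x &, injective f}.
  move=> j j' hj hj' E.
  have := fP j hj; have := fP j' hj'; rewrite -E !inE => /andP [_ h2] /andP [h1 h3].
  have nj : j != x by move: hj; rewrite inE eq_sym => /andP [].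
  have nj' : j' != x by move: hj'; rewrite inE eq_sym => /andP [].
  move: (f j) h1 h2 h3 nj nj' => e h1 h2 h3.
  case: (edge_faces _ _ h1) => ->; case: (edge_faces _ _ h2) => ->;
    case: (edge_faces _ _ h3) => -> //; by rewrite eqxx.
rewrite -(card_in_imset inj); apply: leq_trans (card_face_edges x).
apply: subset_leq_card; apply/subsetP => e /imsetP [j hj ->].
by have := fP j hj; rewrite inE => /andP [].
Qed.
End Geo.
Arguments nbrs {n}.
Arguments card_nbrs {n}.
Section Sums.
Variable R : realFieldType.
Variable n : nat.
Implicit Types (s : config n) (x y : site n).

Lemma spin_bnd s i : -1 <= spin s i :> R /\ spin s i <= 1 :> R.
Proof. rewrite /spin; case: (s i); split; lra. Qed.

Lemma sum_bnd s (B : {set site n}) :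
  - (#|B|%:R) <= \sum_(j in B) spin s j :> R /\ \sum_(j in B) spin s j <= #|B|%:R :> R.
Proof.
split.
  apply: (@le_trans _ _ (\sum_(j in B) (-1 : R))).
    by rewrite sumr_const -mulNrn.
  by apply: ler_sum => j _; case: (spin_bnd s j).
apply: (@le_trans _ _ (\sum_(j in B) (1 : R))).
  by apply: ler_sum => j _; case: (spin_bnd s j).
by rewrite sumr_const.
Qed.

Lemma sum_nbrs s x : \sum_(j | nn x j) spin s j = \sum_(j in nbrs x) spin s j :> R.
Proof. by apply: eq_bigl => j; rewrite inE. Qed.

Lemma sum_ge1 s x j1 j2 : j1 != j2 -> nn x j1 -> nn x j2 -> s j1 -> s j2 ->
  1 <= \sum_(j | nn x j) spin s j :> R.
Proof.
move=> ne h1 h2 s1 s2; rewrite sum_nbrs.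
have i1 : j1 \in nbrs x by rewrite inE.
have i2 : j2 \in nbrs x :\ j1 by rewrite !inE eq_sym ne.
rewrite (big_setD1 _ i1) (big_setD1 _ i2) /= /spin s1 s2.
have := card_nbrs x; rewrite (cardsD1 j1) i1 (cardsD1 j2 (_ :\ j1)) i2 => hc.
case: (sum_bnd s (nbrs x :\ j1 :\ j2)) => hl _.
have : (#|nbrs x :\ j1 :\ j2| <= 1)%N by [].
move: hl; case: #|_| => [|[|//]] /= hl _; lra.
Qed.

Lemma sum_lem1 s x j1 j2 : j1 != j2 -> nn x j1 -> nn x j2 -> ~~ s j1 -> ~~ s j2 ->
  \sum_(j | nn x j) spin s j <= -1 :> R.
Proof.
move=> ne h1 h2 s1 s2; rewrite sum_nbrs.
have i1 : j1 \in nbrs x by rewrite inE.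
have i2 : j2 \in nbrs x :\ j1 by rewrite !inE eq_sym ne.
rewrite (big_setD1 _ i1) (big_setD1 _ i2) /= /spin (negbTE s1) (negbTE s2).
have := card_nbrs x; rewrite (cardsD1 j1) i1 (cardsD1 j2 (_ :\ j1)) i2 => hc.
case: (sum_bnd s (nbrs x :\ j1 :\ j2)) => _ hl.
have : (#|nbrs x :\ j1 :\ j2| <= 1)%N by [].
move: hl; case: #|_| => [|[|//]] /= hl _; lra.
Qed.

Lemma sum_gem1 s x j1 : nn x j1 -> s j1 -> -1 <= \sum_(j | nn x j) spin s j :> R.
Proof.
move=> h1 s1; rewrite sum_nbrs.
have i1 : j1 \in nbrs x by rewrite inE.
rewrite (big_setD1 _ i1) /= /spin s1.
have := card_nbrs x; rewrite (cardsD1 j1) i1 => hc.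
case: (sum_bnd s (nbrs x :\ j1)) => hl _.
have : (#|nbrs x :\ j1| <= 2)%N by [].
move: hl; case: #|_| => [|[|[|//]]] /= hl _; lra.
Qed.
End Sums.
Section Around.
Variable n : nat.
Implicit Types (s : config n) (x y : site n) (v : vtx n).

Ltac case6 q := case: q => [[|[|[|[|[|[|//]]]]]] ?].

Lemma v_in_around v p : v \in face_verts (around v p).
Proof.
case: v => a b; case6 p; rewrite /= !inE ?decK ?eqxx ?orbT //.
Qed.

Lemma touch_around v p q : touch (around v p) (around v q).
Proof. by rewrite /touch; apply/set0Pn; exists v; rewrite inE !v_in_around. Qed.

Ltac memtac := rewrite !inE ?decK ?eqxx ?orbT ?orTb ?andbT //.

Lemma nn_around v q : nn (around v q) (around v (ordS q)).
Proof.
case: v => a b; case6 q; rewrite /nn /=; apply/andP; split;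
  try by rewrite !xpair_eqE /= andbF.
all: apply/set0Pn; first [ exists (a, b, e0); by memtac | exists (a, b, e1); by memtac | exists (a, b, e2); by memtac | exists (a, dec b, e0); by memtac | exists (a, dec b, e1); by memtac | exists (a, dec b, e2); by memtac | exists (dec a, b, e0); by memtac | exists (dec a, b, e1); by memtac | exists (dec a, b, e2); by memtac | exists (dec a, dec b, e0); by memtac | exists (dec a, dec b, e1); by memtac | exists (dec a, dec b, e2); by memtac ].
Qed.
End Around.

Lemma dec_neq m (a : 'I_m.+2) : (dec a == a) = false.
Proof.
apply/negbTE/eqP; rewrite /dec => /eqP; rewrite subr_eq addrC -subr_eq subrr.
move/eqP/(congr1 val) => /=; by rewrite modn_small.
Qed.

Lemma dec_neq' m (a : 'I_m.+2) : (a == dec a) = false.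
Proof. by rewrite eq_sym dec_neq. Qed.

Ltac case6 q := case: q => [[|[|[|[|[|[|//]]]]]] ?].

Lemma around_ne m (v : vtx m.+1) q : around v (ord_pred q) != around v (ordS q).
Proof.
case: v => a b; case6 q; by rewrite /= !xpair_eqE ?dec_neq ?dec_neq' ?andbF.
Qed.

Lemma I1eq (x y : 'I_1) : x = y.
Proof. by rewrite (ord1 x) (ord1 y). Qed.

Lemma around_0 (v : vtx 0) q : around v (ordS q) = around v (ord_pred q).
Proof.
case: v => a b; case6 q; by rewrite /= ?(I1eq (dec a) a) ?(I1eq (dec b) b) ?(I1eq (dec a) a).
Qed.

Section Stab.
Variable R : realFieldType.
Variable n : nat.
Variables J h : R.
Implicit Types (s t : config n) (x y : site n).

Lemma step_flip s x : step s (flip s x).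
Proof. by apply/existsP; exists x. Qed.

Lemma Phi_ge s t : Ham J h s <= Phi J h s t.
Proof.
have [z zmax] : exists z : config n, forall w : config n, Ham J h w <= Ham J h z.
  have := @real_arg_maxP R (config n) s predT (Ham J h) isT (fun i _ => num_real (Ham J h i)).
  by case => [z _ H]; exists z => // w; apply: H.
apply: seqmin_ge.
  apply/eqP => /(congr1 (fun l => Ham J h z \in l)); rewrite map_f //.
  rewrite mem_enum inE /reach_below zmax /=.
  by apply: connect_all => a b; rewrite /= step_flip zmax.
by move=> y /mapP [z' ]; rewrite mem_enum inE => /andP [H _] ->.
Qed.

Lemma Phi_le s t c (z : config n) : Ham J h z = c -> reach_below J h c s t -> Phi J h s t <= c.
Proof.
move=> Hz Hr; apply: seqmin_le; rewrite -Hz; apply: map_f.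
by rewrite mem_enum inE Hz.
Qed.

Lemma Vstab_some s t c : Ham J h t < Ham J h s -> Phi J h s t <= c ->
  exists2 V, Vstab J h s = Some V & V <= c - Ham J h s.
Proof.
move=> Ht Hp; have tI : t \in Iset J h s by rewrite inE.
rewrite /Vstab; case: eqP => [E|_]; first by move: tI; rewrite E inE.
eexists; first reflexivity.
rewrite lerD2r; apply: le_trans Hp; apply: seqmin_le; apply: map_f.
by rewrite mem_enum.
Qed.

Lemma V0 s x : Ham J h (flip s x) < Ham J h s -> Vstab J h s = Some 0.
Proof.
move=> Hl.
have Hp : Phi J h s (flip s x) <= Ham J h s.
  apply: (Phi_le _ _ _ s) => //; rewrite /reach_below lexx /=.
  by apply: connect1; rewrite /= step_flip ltW.
have [V E HV] := Vstab_some _ _ _ Hl Hp; rewrite E; congr Some.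
apply/eqP; rewrite eq_le; move: HV; rewrite subrr => -> /=.
move: E; rewrite /Vstab; case: eqP => // HI [<-].
rewrite subr_ge0; apply: seqmin_ge.
  apply/eqP => /(congr1 (fun l => Phi J h s (flip s x) \in l)); rewrite map_f //.
  by rewrite mem_enum inE.
by move=> y /mapP [t' _ ->]; apply: Phi_ge.
Qed.

Lemma V2 s x1 x2 : 0 < J - h ->
  Ham J h (flip s x1) <= Ham J h s + (J - h) ->
  Ham J h (flip (flip s x1) x2) < Ham J h s ->
  exists V, Vstab J h s = Some V /\ V <= J - h.
Proof.
move=> Hjh H1 H2; set s1 := flip s x1; set s2 := flip s1 x2.
pose z := if Ham J h s1 <= Ham J h s then s else s1.
have Hz1 : Ham J h s <= Ham J h z by rewrite /z; case: ifP => // /negbT; rewrite -ltNge => /ltW.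
have Hz2 : Ham J h s1 <= Ham J h z by rewrite /z; case: ifP => // _.
have Hz3 : Ham J h z <= Ham J h s + (J - h).
  by rewrite /z; case: ifP => // _; rewrite lerDl ltW.
have Hp : Phi J h s s2 <= Ham J h z.
  apply: (Phi_le _ _ _ z) => //; rewrite /reach_below Hz1 /=.
  apply: (connect_trans (y := s1)); first by apply: connect1; rewrite /= step_flip.
  apply: connect1; rewrite /= step_flip /=; apply: le_trans Hz1; exact: ltW.
have [V E HV] := Vstab_some _ _ _ H2 Hp; exists V; split => //.
apply: le_trans HV _; rewrite lerBlDr addrC; exact: Hz3.
Qed.
End Stab.

Lemma around_dich n (v : vtx n) :
  (forall q, around v (ord_pred q) != around v (ordS q)) \/
  (forall q, around v (ordS q) = around v (ord_pred q)).
Proof.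
case: n v => [|m] v; [right => q; exact: around_0 | left => q; exact: around_ne].
Qed.

Section Comp.
Variable n : nat.
Implicit Types (s : config n) (i j y : site n).

Lemma comp_plus s i j : j \in Defs.comp s i -> s j.
Proof. by rewrite inE => /andP [/andP [_ ->]]. Qed.

Lemma comp_out s i j y : j \in Defs.comp s i -> y \notin Defs.comp s i -> touch j y -> ~~ s y.
Proof.
rewrite !inE => /andP [/andP [si sj] cij] hy tjy; apply/negP => sy.
move/negP: hy; apply; rewrite si sy /=.
apply: (connect_trans cij); apply: connect1; by rewrite /= sj sy.
Qed.

Lemma angle_mem (C : {set site n}) v k : has_angle C v k ->
  exists st : 'I_6, forall p, (around v p \in C) = ((p + 6 - st) %% 6 < k)%N.
Proof.
case/andP => _ /existsP [st /eqP E]; exists st => p.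
by move/setP: E => /(_ p); rewrite !inE.
Qed.
End Comp.

Lemma r0 (st : 'I_6) : ((st + 6 - st) %% 6 = 0)%N. Proof. by case6 st. Qed.
Lemma r1 (st : 'I_6) : ((ordS st + 6 - st) %% 6 = 1)%N. Proof. by case6 st. Qed.
Lemma r2 (st : 'I_6) : ((ordS (ordS st) + 6 - st) %% 6 = 2)%N. Proof. by case6 st. Qed.
Lemma r5 (st : 'I_6) : ((ord_pred st + 6 - st) %% 6 = 5)%N. Proof. by case6 st. Qed.
Lemma r4 (st : 'I_6) : ((ord_pred (ord_pred st) + 6 - st) %% 6 = 4)%N. Proof. by case6 st. Qed.
Lemma r3 (st : 'I_6) : ((ord_pred (ord_pred (ord_pred st)) + 6 - st) %% 6 = 3)%N.
Proof. by case6 st. Qed.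

Section Main.
Variable R : realFieldType.
Variable n : nat.
Variables J h : R.
Hypothesis hpos : 0 < h.
Hypothesis hJ : h < J.
Variable sigma : config n.

Lemma spin_m (s : config n) x : ~~ s x -> spin s x = -1 :> R.
Proof. by rewrite /spin => /negbTE ->. Qed.
Lemma spin_p (s : config n) x : s x -> spin s x = 1 :> R.
Proof. by rewrite /spin => ->. Qed.

Lemma angle5 i v : sigma i -> has_angle (Defs.comp sigma i) v 5 ->
  Vstab J h sigma = Some 0.
Proof.
move=> si /angle_mem [st Hm]; set C := Defs.comp sigma i in Hm.
set g := around v (ord_pred st).
have gC : g \notin C by rewrite Hm r5.
have a1C : around v (ord_pred (ord_pred st)) \in C by rewrite Hm r4.
have a2C : around v st \in C by rewrite Hm r0.
have sg : ~~ sigma g by apply: (comp_out _ _ _ _ _ a2C gC); apply: touch_around.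
have n1 : nn g (around v (ord_pred (ord_pred st))).
  by rewrite nnC /g -{2}(ord_predK (ord_pred st)); apply: nn_around.
have n2 : nn g (around v st).
  by rewrite /g -{2}(ord_predK st); apply: nn_around.
have ne : around v (ord_pred (ord_pred st)) != around v st.
  case: (around_dich _ v) => [H|H].
    by have := H (ord_pred st); rewrite ord_predK.
  have : around v (ordS st) \in C by rewrite Hm r1.
  by rewrite H (negbTE gC).
have hs := sum_ge1 R _ _ _ _ _ ne n1 n2 (comp_plus _ _ _ _ a1C) (comp_plus _ _ _ _ a2C).
apply: (@V0 R n J h sigma g); rewrite ham_flip (spin_m _ _ sg).
have hJ0 : 0 < J by apply: lt_trans hJ.
have : J <= J * \sum_(j | nn g j) spin sigma j.
  by rewrite -{1}(mulr1 J) ler_wpM2l // ltW.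
move: hs; set S := \sum_(j | nn g j) spin sigma j; set H0 := Ham J h sigma => hs hSJ. have hp := hpos. lra.
Qed.

Lemma angle1 i v : sigma i -> has_angle (Defs.comp sigma i) v 1 ->
  Vstab J h sigma = Some 0.
Proof.
move=> si /angle_mem [st Hm]; set C := Defs.comp sigma i in Hm.
set f := around v st.
have fC : f \in C by rewrite Hm r0.
have b1C : around v (ord_pred st) \notin C by rewrite Hm r5.
have b2C : around v (ordS st) \notin C by rewrite Hm r1.
have sb1 : ~~ sigma (around v (ord_pred st)).
  by apply: (comp_out _ _ _ _ _ fC b1C); apply: touch_around.
have sb2 : ~~ sigma (around v (ordS st)).
  by apply: (comp_out _ _ _ _ _ fC b2C); apply: touch_around.
have n1 : nn f (around v (ord_pred st)).
  by rewrite nnC /f -{2}(ord_predK st); apply: nn_around.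
have n2 : nn f (around v (ordS st)) by apply: nn_around.
have ne : around v (ord_pred st) != around v (ordS st).
  case: (around_dich _ v) => [H|H]; first exact: H.
  have : around v (ordS (ordS st)) \in C.
    by rewrite H ordSK.
  by rewrite Hm r2.
have hs := sum_lem1 R _ _ _ _ _ ne n1 n2 sb1 sb2.
apply: (@V0 R n J h sigma f); rewrite ham_flip (spin_p _ _ (comp_plus _ _ _ _ fC)).
have hJ0 : 0 < J by apply: lt_trans hJ.
have : J * \sum_(j | nn f j) spin sigma j <= - J.
  by rewrite -mulrN1 ler_wpM2l // ltW.
move: hs; set S := \sum_(j | nn f j) spin sigma j; set H0 := Ham J h sigma => hs hSJ.
have hp := hpos; have hj := hJ. lra.
Qed.

Lemma angle4 i v : sigma i -> has_angle (Defs.comp sigma i) v 4 ->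
  exists V, Vstab J h sigma = Some V /\ V <= J - h.
Proof.
move=> si /angle_mem [st Hm]; set C := Defs.comp sigma i in Hm.
set g1 := around v (ord_pred (ord_pred st)).
set g2 := around v (ord_pred st).
set c3 := around v (ord_pred (ord_pred (ord_pred st))).
set c0 := around v st.
have g1C : g1 \notin C by rewrite Hm r4.
have g2C : g2 \notin C by rewrite Hm r5.
have c3C : c3 \in C by rewrite Hm r3.
have c0C : c0 \in C by rewrite Hm r0.
have sg1 : ~~ sigma g1 by apply: (comp_out _ _ _ _ _ c0C g1C); apply: touch_around.
have sg2 : ~~ sigma g2 by apply: (comp_out _ _ _ _ _ c0C g2C); apply: touch_around.
have sc0 := comp_plus _ _ _ _ c0C.
have sc3 := comp_plus _ _ _ _ c3C.
have n13 : nn g1 c3.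
  by rewrite nnC /g1 /c3 -{2}(ord_predK (ord_pred (ord_pred st))); apply: nn_around.
have n21 : nn g2 g1.
  by rewrite nnC /g1 /g2 -{2}(ord_predK (ord_pred st)); apply: nn_around.
have n20 : nn g2 c0.
  by rewrite /c0 /g2 -{2}(ord_predK st); apply: nn_around.
have hJ0 : 0 < J by apply: lt_trans hJ.
have hp := hpos; have hj := hJ.
apply: (@V2 R n J h sigma g1 g2); first by rewrite subr_gt0.
  rewrite ham_flip (spin_m _ _ sg1).
  have hs := sum_gem1 R _ _ _ _ n13 sc3.
  have : - J <= J * \sum_(j | nn g1 j) spin sigma j.
    by rewrite -mulrN1 ler_wpM2l // ltW.
  move: hs; set S := \sum_(j | nn g1 j) spin sigma j; set H0 := Ham J h sigma => hs hSJ.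
  lra.
set s1 := flip sigma g1.
have ng1c0 : g1 != c0 by apply: contraNneq sg1 => ->.
have ng2g1 : g2 != g1 by apply: nn_neq n21.
have s1g1 : s1 g1 by rewrite /s1 flipE eqxx.
have s1c0 : s1 c0 by rewrite /s1 flipE eq_sym (negbTE ng1c0).
have s1g2 : ~~ s1 g2 by rewrite /s1 flipE (negbTE ng2g1).
have hs := sum_ge1 R _ _ _ _ _ ng1c0 n21 n20 s1g1 s1c0.
rewrite ham_flip (spin_m _ _ s1g2) ham_flip (spin_m _ _ sg1).
have : J <= J * \sum_(j | nn g2 j) spin s1 j.
  by rewrite -{1}(mulr1 J) ler_wpM2l // ltW.
have hs1 := sum_gem1 R _ _ _ _ n13 sc3.
have : - J <= J * \sum_(j | nn g1 j) spin sigma j.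
  by rewrite -mulrN1 ler_wpM2l // ltW.
move: hs hs1; set S := \sum_(j | nn g2 j) spin s1 j; set S1 := \sum_(j | nn g1 j) spin sigma j.
set H0 := Ham J h sigma => hs hs1 h1 h2.
lra.
Qed.
End Main.

Theorem lemma4p2 (R : realFieldType) (n : nat) (J h : R) (sigma : config n) :
  0 < h -> h < J ->
  ((exists (C : {set site n}) (v : vtx n),
      is_component sigma C /\ (has_angle C v 5 \/ has_angle C v 1)) ->
     Vstab J h sigma = Some 0 /\ sigma \notin Xlev J h 0)
  /\
  ((exists (C : {set site n}) (v : vtx n),
      is_component sigma C /\ has_angle C v 4) ->
     (exists V, Vstab J h sigma = Some V /\ V <= J - h)
     /\ sigma \notin Xlev J h (J - h)).
Proof.
move=> hp hj; split.
  case=> C [v [[i [si ->]] H]].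
  have E : Vstab J h sigma = Some 0.
    by case: H => H; [apply: (@angle5 R n J h hp hj sigma i v si H) | apply: (@angle1 R n J h hp hj sigma i v si H)].
  by split => //; rewrite inE E ltxx.
case=> C [v [[i [si ->]] H]].
have [V [E HV]] := @angle4 R n J h hp hj sigma i v si H.
split; first by exists V.
by rewrite inE E -leNgt.
Qed.
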